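(* Let $P$ be the symbol probability mass function of a stationary memoryless source over an alphabet of size $D\ge2$, with minimal mass $p_{\min}$. Let $\mathcal C$ be a Tunstall code with codewords of fixed length $m$ over an alphabet $\mathcal X$ ($|\mathcal X|\ge2$), corresponding to a Tunstall tree with $n$ leaves where $n\le|\mathcal X|^m<n+(D-1)$. For $\varepsilon>0$ let $d=d(m,\varepsilon):=\frac{m\varepsilon\ln|\mathcal X|}{1+\varepsilon}+\ln\big(1-\frac{D-1}{|\mathcal X|^m}\big)$ if $D>2$, and $d:=\frac{m\varepsilon\ln|\mathcal X|}{1+\varepsilon}$ if $D=2$, and suppose $d>0$. If $$p_{\min}\ge\frac{W_0(-e^{-d-1})}{W_{-1}(-e^{-d-1})},$$ then the compression rate $R$ of the Tunstall code satisfies $R\le(1+\varepsilon)H(P)$.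
   Context: $W_0$ and $W_{-1}$ are the principal and secondary real branches of the Lambert $W$ function ($W(u)e^{W(u)}=u$). A Tunstall tree with $n$ leaves is obtained from the root by repeatedly expanding a leaf of maximal probability into its $D$ children (a leaf reached by source symbols $s_1\cdots s_k$ has probability $\prod_jP(s_j)$); the Tunstall code parses the source sequence into the segments labelling the leaves and assigns to each leaf a distinct codeword of length $m$ over $\mathcal X$. The compression rate is $R:=\frac{m\log|\mathcal X|}{\mathbb E[\text{depth of the parsed leaf}]}$, the expected number of code letters (in the same logarithmic units as $H$) per source symbol, and $H(P)=-\sum_sP(s)\log P(s)$. *)

(* Defs.v *)
From Stdlib Require Import Reals Lra Lia List.
Import ListNotations.
Open Scope R_scope.

(* Source alphabet {0,...,D-1}; P : nat -> R gives the symbol probabilities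
   (only indices < D matter). A word is a list of source symbols. *)

Definition is_pmf (D : nat) (P : nat -> R) : Prop :=
  (forall s, (s < D)%nat -> 0 <= P s) /\
  fold_right Rplus 0 (map P (seq 0 D)) = 1.

Definition pmin (D : nat) (P : nat -> R) : R :=
  fold_right Rmin (P 0%nat) (map P (seq 0 D)).

Definition word_prob (P : nat -> R) (w : list nat) : R :=
  fold_right (fun s acc => P s * acc) 1 w.

(* Tunstall trees, represented by their list of leaves (words).
   Start from the root (empty word) and repeatedly expand a leaf of maximal
   probability into its D children. *)
Inductive tunstall_tree (D : nat) (P : nat -> R) : list (list nat) -> Prop :=
| tt_root : tunstall_tree D P [ [] ]
| tt_expand : forall T1 w T2,
    tunstall_tree D P (T1 ++ w :: T2) ->
    (forall v, In v (T1 ++ w :: T2) -> word_prob P v <= word_prob P w) ->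
    tunstall_tree D P (T1 ++ T2 ++ map (fun s => w ++ [s]) (seq 0 D)).

Definition expected_depth (P : nat -> R) (T : list (list nat)) : R :=
  fold_right Rplus 0 (map (fun w => word_prob P w * INR (length w)) T).

(* compression rate R = m log|X| / E[depth], natural logarithm *)
Definition compression_rate (P : nat -> R) (T : list (list nat))
  (m K : nat) : R :=
  INR m * ln (INR K) / expected_depth P T.

Definition entropy (D : nat) (P : nat -> R) : R :=
  - fold_right Rplus 0 (map (fun s => P s * ln (P s)) (seq 0 D)).

(* Lambert W branches, via their defining property: W(u) e^{W(u)} = u,
   principal branch W_0 >= -1, secondary branch W_{-1} <= -1. *)
Definition is_LambertW0 (u w : R) : Prop := w * exp w = u /\ -1 <= w.
Definition is_LambertWm1 (u w : R) : Prop := w * exp w = u /\ w <= -1.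

Definition d_param (D m K : nat) (eps : R) : R :=
  if Nat.ltb 2 D then
    INR m * eps * ln (INR K) / (1 + eps) + ln (1 - INR (D - 1) / INR (K ^ m))
  else INR m * eps * ln (INR K) / (1 + eps).

(* Main.v *)
Require Import Defs.
From Stdlib Require Import Reals List.
From Stdlib Require Import Lra Lia Psatz.
Import ListNotations.
Open Scope R_scope.

Definition sumR (l : list R) : R := fold_right Rplus 0 l.

Lemma sumR_app l1 l2 : sumR (l1 ++ l2) = sumR l1 + sumR l2.
Proof. induction l1; simpl; [lra|]. unfold sumR in *; simpl; rewrite IHl1; lra. Qed.

Lemma sumR_cons x l : sumR (x :: l) = x + sumR l.
Proof. reflexivity. Qed.

Lemma sumR_ext {A} (f g : A -> R) l :
  (forall x, In x l -> f x = g x) -> sumR (map f l) = sumR (map g l).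
Proof.
  induction l; intros H; simpl; auto.
  unfold sumR in *; simpl. rewrite H by (left; auto). rewrite IHl; auto.
  intros; apply H; right; auto.
Qed.

Lemma sumR_le {A} (f g : A -> R) l :
  (forall x, In x l -> f x <= g x) -> sumR (map f l) <= sumR (map g l).
Proof.
  induction l; intros H; simpl; [unfold sumR; simpl; lra|].
  unfold sumR in *; simpl.
  assert (f a <= g a) by (apply H; left; auto).
  assert (fold_right Rplus 0 (map f l) <= fold_right Rplus 0 (map g l))
    by (apply IHl; intros; apply H; right; auto).
  lra.
Qed.

Lemma sumR_plus {A} (f g : A -> R) l :
  sumR (map (fun x => f x + g x) l) = sumR (map f l) + sumR (map g l).
Proof. induction l; unfold sumR in *; simpl; [lra|]. rewrite IHl; lra. Qed.

Lemma sumR_scal {A} c (f : A -> R) l :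
  sumR (map (fun x => c * f x) l) = c * sumR (map f l).
Proof. induction l; unfold sumR in *; simpl; [lra|]. rewrite IHl; lra. Qed.

Lemma sumR_const {A} c (l : list A) :
  sumR (map (fun _ => c) l) = INR (length l) * c.
Proof.
  induction l; unfold sumR in *; cbn [map fold_right length]; [simpl; lra|]. rewrite IHl.
  rewrite S_INR; lra.
Qed.

Lemma sumR_nonneg {A} (f : A -> R) l :
  (forall x, In x l -> 0 <= f x) -> 0 <= sumR (map f l).
Proof.
  intros H. replace 0 with (sumR (map (fun _ : A => 0) l)).
  - apply sumR_le; auto.
  - rewrite sumR_const; lra.
Qed.

Lemma sumR_single {A} (f : A -> R) l y :
  (forall x, In x l -> 0 <= f x) -> In y l -> f y <= sumR (map f l).
Proof.
  induction l; intros H Hy; simpl in Hy; [contradiction|].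
  unfold sumR in *; simpl.
  assert (0 <= f a) by (apply H; left; auto).
  destruct Hy as [<-|Hy].
  - assert (0 <= fold_right Rplus 0 (map f l)).
    { apply (sumR_nonneg f l). intros; apply H; right; auto. }
    lra.
  - assert (f y <= fold_right Rplus 0 (map f l)) by (apply IHl; auto; intros; apply H; right; auto).
    lra.
Qed.

Lemma fold_Rmin_le l x0 x : In x l -> fold_right Rmin x0 l <= x.
Proof.
  induction l; simpl; intros H; [contradiction|].
  destruct H as [<-|H].
  - apply Rmin_l.
  - eapply Rle_trans; [apply Rmin_r| auto].
Qed.

Lemma word_prob_snoc P w s : word_prob P (w ++ [s]) = word_prob P w * P s.
Proof. induction w; simpl; [ring|]. rewrite IHw; ring. Qed.

Lemma ln_le_x (y : R) : 0 < y -> ln y <= y - 1.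
Proof. intros H. pose proof (exp_ineq1_le (ln y)). rewrite exp_ln in H0; lra. Qed.

Lemma ln_le' x y : 0 < x -> x <= y -> ln x <= ln y.
Proof.
  intros H1 H2. destruct (Req_dec x y) as [->|]; [lra|].
  left; apply ln_increasing; lra.
Qed.

Lemma chord (a q x w0 : R) : 0 < a -> a < 1 -> 0 < q -> a * q <= x -> x <= q ->
  w0 * (1 - a) = a * ln a ->
  x * ln x <= (q - x) * w0 + x * ln q.
Proof.
  intros Ha Ha1 Hq H1 H2 Hw.
  set (y := x / q).
  assert (Hx : x = y * q) by (unfold y; field; lra).
  assert (Hy1 : a <= y) by (apply Rmult_le_reg_r with q; [lra|]; rewrite <- Hx; lra).
  assert (Hy2 : y <= 1) by (apply Rmult_le_reg_r with q; [lra|]; rewrite <- Hx; lra).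
  assert (Hy0 : 0 < y) by lra.
  rewrite Hx. rewrite ln_mult by lra.
  assert (Hk : (1 - a) * (y * ln y) <= (1 - y) * (a * ln a)).
  { assert (h1 : ln (y / a) <= y / a - 1) by (apply ln_le_x; apply Rdiv_lt_0_compat; lra).
    assert (Hya : y = (y / a) * a) by (field; lra).
    assert (hl : ln y = ln (y / a) + ln a) by (rewrite Hya at 1; apply ln_mult; [apply Rdiv_lt_0_compat|]; lra).
    assert (h1' : a * (ln a - ln y) >= a - y).
    { rewrite hl. assert (a * (y / a - 1) = y - a) by (field; lra). nra. }
    assert (h2 : ln y <= y - 1) by (apply ln_le_x; lra).
    assert (p1 : 0 <= (1 - y) * (a * (ln a - ln y) - (a - y))) by (apply Rmult_le_pos; lra).
    assert (p2 : 0 <= (y - a) * ((y - 1) - ln y)) by (apply Rmult_le_pos; lra).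
    nra. }
  assert (Hk2 : y * ln y <= (1 - y) * w0).
  { apply Rmult_le_reg_l with (1 - a); [lra|]. rewrite Hk. 
    replace ((1 - a) * ((1 - y) * w0)) with ((1-y) * (w0 * (1 - a))) by ring.
    rewrite Hw; lra. }
  assert (q * (y * ln y) <= q * ((1 - y) * w0)) by (apply Rmult_le_compat_l; lra).
  nra.
Qed.

Lemma tunstall_inv D P T : (0 < D)%nat -> is_pmf D P -> 0 < pmin D P ->
  (forall s, (s < D)%nat -> pmin D P <= P s <= 1) -> tunstall_tree D P T ->
  (exists q, 0 < q /\ forall v, In v T -> pmin D P * q <= word_prob P v <= q) /\
  sumR (map (word_prob P) T) = 1 /\
  sumR (map (fun v => word_prob P v * ln (word_prob P v)) T) = - expected_depth P T * entropy D P.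
Proof.
  intros HD [Hnn Hsum] Hpm Hb HT.
  change (fold_right Rplus 0 (map P (seq 0 D))) with (sumR (map P (seq 0 D))) in Hsum.
  unfold expected_depth, entropy.
  change (fold_right Rplus 0 (map (fun w => word_prob P w * INR (length w)) ?T))
    with (sumR (map (fun w => word_prob P w * INR (length w)) T)).
  change (fold_right Rplus 0 (map (fun s => P s * ln (P s)) (seq 0 D)))
    with (sumR (map (fun s => P s * ln (P s)) (seq 0 D))).
  set (HH := sumR (map (fun s => P s * ln (P s)) (seq 0 D))).
  induction HT as [|T1 w T2 HT IH Hmax].
  - split; [|split].
    + exists 1. split; [lra|]. intros v [<-|[]]. simpl.
      destruct (Hb 0%nat HD). lra.
    + unfold sumR; simpl; lra.
    + unfold sumR; simpl. rewrite ln_1. lra.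
  - destruct IH as [[q [Hq Hv]] [IS IL]].
    assert (Hwin : In w (T1 ++ w :: T2)) by (apply in_or_app; right; left; auto).
    destruct (Hv w Hwin) as [Hw1 Hw2].
    assert (Hpw : 0 < word_prob P w) by nra.
    set (C := map (fun s => w ++ [s]) (seq 0 D)).
    assert (Hin : forall v, In v C -> exists s, (s < D)%nat /\ v = w ++ [s]).
    { intros v Hv'. unfold C in Hv'. apply in_map_iff in Hv' as [s [<- Hs]].
      apply in_seq in Hs. exists s; split; [lia|auto]. }
    assert (sC1 : sumR (map (word_prob P) C) = word_prob P w).
    { unfold C; rewrite map_map.
      rewrite (sumR_ext _ (fun s => word_prob P w * P s)) by (intros; apply word_prob_snoc).
      rewrite sumR_scal, Hsum; ring. }
    assert (sC2 : sumR (map (fun v => word_prob P v * INR (length v)) C)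
                  = word_prob P w * INR (length w) + word_prob P w).
    { unfold C; rewrite map_map.
      rewrite (sumR_ext _ (fun s => (word_prob P w * INR (length w) + word_prob P w) * P s)).
      - rewrite sumR_scal, Hsum; ring.
      - intros s _. rewrite word_prob_snoc, length_app, plus_INR. simpl (INR (length [s])). ring. }
    assert (sC3 : sumR (map (fun v => word_prob P v * ln (word_prob P v)) C)
                  = word_prob P w * ln (word_prob P w) + word_prob P w * HH).
    { unfold C; rewrite map_map.
      rewrite (sumR_ext _ (fun s => (word_prob P w * ln (word_prob P w)) * P s
                                    + word_prob P w * (P s * ln (P s)))).
      - rewrite sumR_plus, !sumR_scal, Hsum. unfold HH. ring.
      - intros s Hs. apply in_seq in Hs. destruct (Hb s ltac:(lia)).
        rewrite word_prob_snoc, ln_mult by lra. ring. }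
    repeat rewrite map_app in *. repeat rewrite sumR_app in *. cbn [map] in IS, IL.
    repeat rewrite sumR_cons in IS, IL.
    split; [|split].
    + exists (word_prob P w). split; [lra|]. intros v Hv'.
      apply in_app_iff in Hv' as [Hv'|Hv'].
      * assert (In v (T1 ++ w :: T2)) by (apply in_or_app; left; auto).
        specialize (Hmax v H). destruct (Hv v H). split; [|exact Hmax].
        assert (pmin D P * word_prob P w <= pmin D P * q) by (apply Rmult_le_compat_l; lra).
        lra.
      * apply in_app_iff in Hv' as [Hv'|Hv'].
        -- assert (In v (T1 ++ w :: T2)) by (apply in_or_app; right; right; auto).
           specialize (Hmax v H). destruct (Hv v H). split; [|exact Hmax].
           assert (pmin D P * word_prob P w <= pmin D P * q) by (apply Rmult_le_compat_l; lra).
           lra.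
        -- destruct (Hin v Hv') as [s [Hs ->]]. rewrite word_prob_snoc.
           destruct (Hb s Hs). split; nra.
    + lra.
    + rewrite sC2, sC3.
      match type of IL with _ = ?R => 
        transitivity (R + word_prob P w * HH); [rewrite <- IL; ring | rewrite sumR_cons; ring] end.
Qed.

Theorem theorem15 (D : nat) (P : nat -> R) (K m : nat) (T : list (list nat))
  (eps w0 wm1 : R) :
  (2 <= D)%nat ->
  is_pmf D P ->
  (2 <= K)%nat ->
  tunstall_tree D P T ->
  (length T <= K ^ m)%nat ->
  (K ^ m < length T + (D - 1))%nat ->
  0 < eps ->
  (D - 1 < K ^ m)%nat ->
  0 < d_param D m K eps ->
  is_LambertW0 (- exp (- d_param D m K eps - 1)) w0 ->
  is_LambertWm1 (- exp (- d_param D m K eps - 1)) wm1 ->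
  pmin D P >= w0 / wm1 ->
  compression_rate P T m K <= (1 + eps) * entropy D P.
Proof.
  intros HD Hpmf HK HT Hlen1 Hlen2 Heps HDK Hd [Hw0e Hw0] [Hw1e Hw1] Hpm.
  assert (Hdp := Hd).
  set (d := d_param D m K eps) in *.
  assert (Hex : 0 < exp (- d - 1)) by apply exp_pos.
  pose proof (exp_pos w0) as E0. pose proof (exp_pos wm1) as E1.
  assert (Hw0n : w0 < 0) by nra.
  assert (Lw0 : ln (- w0) + w0 = - d - 1).
  { rewrite <- (ln_exp w0) at 2. rewrite <- ln_mult by lra.
    replace (- w0 * exp w0) with (exp (- d - 1)) by lra. apply ln_exp. }
  assert (Lw1 : ln (- wm1) + wm1 = - d - 1).
  { rewrite <- (ln_exp wm1) at 2. rewrite <- ln_mult by lra.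
    replace (- wm1 * exp wm1) with (exp (- d - 1)) by lra. apply ln_exp. }
  assert (Hneq : wm1 < w0).
  { destruct (Rle_lt_dec w0 wm1); [|auto].
    assert (w0 = -1) by lra. rewrite H in Lw0. replace (- -1) with 1 in Lw0 by lra.
    rewrite ln_1 in Lw0. lra. }
  set (a := w0 / wm1) in *.
  assert (Ha0 : 0 < a) by (unfold a; replace (w0 / wm1) with ((- w0) / (- wm1)) by (field; lra); apply Rdiv_lt_0_compat; lra).
  assert (Ha1 : a < 1).
  { unfold a. apply Rmult_lt_reg_r with (- wm1); [lra|].
    replace (w0 / wm1 * - wm1) with (- w0) by (field; lra). lra. }
  assert (Hla : ln a = wm1 - w0).
  { assert (- w0 = a * - wm1) by (unfold a; field; lra).
    assert (ln (- w0) = ln a + ln (- wm1)) by (rewrite H; apply ln_mult; lra).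
    lra. }
  assert (Hw : w0 * (1 - a) = a * ln a).
  { rewrite Hla. unfold a. field. lra. }
  destruct Hpmf as [Hnn Hsum].
  assert (Hb : forall s, (s < D)%nat -> pmin D P <= P s <= 1).
  { intros s Hs. split.
    - unfold pmin. apply fold_Rmin_le. apply in_map. apply in_seq. lia.
    - rewrite <- Hsum. change (fold_right Rplus 0 (map P (seq 0 D))) with (sumR (map P (seq 0 D))).
      apply sumR_single.
      + intros x Hx. apply in_seq in Hx. apply Hnn. lia.
      + apply in_seq. lia. }
  assert (Hpm0 : 0 < pmin D P) by lra.
  destruct (tunstall_inv D P T ltac:(lia) (conj Hnn Hsum) Hpm0 Hb HT) as [[q [Hq Hv]] [HS HL]].
  set (n := length T) in *.
  assert (Hn : (0 < n)%nat) by lia.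
  assert (Hn' : 0 < INR n) by (apply lt_0_INR; lia).
  assert (HLE : sumR (map (fun v => word_prob P v * ln (word_prob P v)) T)
                <= INR n * (q * w0) + (ln q - w0)).
  { apply Rle_trans with (sumR (map (fun v => q * w0 + (ln q - w0) * word_prob P v) T)).
    2:{ rewrite sumR_plus, (sumR_scal (ln q - w0) (word_prob P)), sumR_const.
        assert (HS2 : sumR (map (fun x => word_prob P x) T) = 1) by exact HS.
        rewrite HS. fold n. lra. }
    apply sumR_le. intros v Hvin.
    destruct (Hv v Hvin).
    assert (a * q <= pmin D P * q) by (apply Rmult_le_compat_r; lra).
    pose proof (chord a q (word_prob P v) w0 Ha0 Ha1 Hq ltac:(lra) ltac:(lra) Hw). lra. }
  assert (Hkey : ln (INR n * q * - w0) <= INR n * q * - w0 - 1)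
    by (apply ln_le_x; apply Rmult_lt_0_compat; [apply Rmult_lt_0_compat|]; lra).
  rewrite ln_mult, ln_mult in Hkey by (try apply Rmult_lt_0_compat; lra).
  assert (HLd : sumR (map (fun v => word_prob P v * ln (word_prob P v)) T) <= d - ln (INR n))
    by nra.
  assert (Hnd : INR m * ln (INR K) / (1 + eps) <= ln (INR n) - d).
  { assert (HK0 : 0 < INR K) by (apply lt_0_INR; lia).
    assert (HN : INR (K ^ m) = INR K ^ m) by apply pow_INR.
    assert (HN0 : 0 < INR (K ^ m)) by (apply lt_0_INR; lia).
    assert (HlnN : ln (INR (K ^ m)) = INR m * ln (INR K)) by (rewrite HN; apply ln_pow; lra).
    assert (Hsplit : INR m * ln (INR K) / (1 + eps) + INR m * eps * ln (INR K) / (1 + eps)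
                     = INR m * ln (INR K)) by (field; lra).
    unfold d, d_param in *. destruct (Nat.ltb_spec 2 D).
    - assert (Hle : INR (K ^ m) <= INR n + INR (D - 1)).
      { rewrite <- plus_INR. apply le_INR. lia. }
      assert (Hlt : INR (D - 1) < INR (K ^ m)) by (apply lt_INR; lia).
      assert (H1 : 1 - INR (D - 1) / INR (K ^ m) = (INR (K ^ m) - INR (D - 1)) / INR (K ^ m))
        by (field; lra).
      assert (H2 : INR (K ^ m) - INR (D - 1) = (1 - INR (D - 1) / INR (K ^ m)) * INR (K ^ m))
        by (field; lra).
      assert (H3 : 0 < 1 - INR (D - 1) / INR (K ^ m)).
      { rewrite H1. apply Rdiv_lt_0_compat; lra. }
      assert (H4 : ln (INR (K ^ m) - INR (D - 1))
                   = ln (1 - INR (D - 1) / INR (K ^ m)) + ln (INR (K ^ m)))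
        by (rewrite H2 at 1; apply ln_mult; lra).
      assert (H5 : ln (INR (K ^ m) - INR (D - 1)) <= ln (INR n)) by (apply ln_le'; lra).
      lra.
    - assert (Hle : INR (K ^ m) <= INR n) by (apply le_INR; lia).
      assert (ln (INR (K ^ m)) <= ln (INR n)) by (apply ln_le'; lra).
      lra. }
  assert (Hent : 0 <= entropy D P).
  { unfold entropy.
    change (fold_right Rplus 0 (map (fun s => P s * ln (P s)) (seq 0 D)))
      with (sumR (map (fun s => P s * ln (P s)) (seq 0 D))).
    assert (sumR (map (fun s => P s * ln (P s)) (seq 0 D)) <= sumR (map (fun _ => 0) (seq 0 D))).
    { apply sumR_le. intros s Hs. apply in_seq in Hs. destruct (Hb s ltac:(lia)).
      assert (ln (P s) <= 0) by (rewrite <- ln_1; apply ln_le'; lra). nra. }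
    rewrite sumR_const in H. lra. }
  assert (HED : 0 <= expected_depth P T).
  { unfold expected_depth.
    change (fold_right Rplus 0 (map (fun w => word_prob P w * INR (length w)) T))
      with (sumR (map (fun w => word_prob P w * INR (length w)) T)).
    apply sumR_nonneg. intros v Hvin. destruct (Hv v Hvin).
    apply Rmult_le_pos; [nra | apply pos_INR]. }
  assert (HX : INR m * ln (INR K) / (1 + eps) <= expected_depth P T * entropy D P) by lra.
  assert (HX2 : INR m * ln (INR K) <= (1 + eps) * (expected_depth P T * entropy D P)).
  { replace (INR m * ln (INR K)) with ((1 + eps) * (INR m * ln (INR K) / (1 + eps))) by (field; lra).
    apply Rmult_le_compat_l; lra. }
  unfold compression_rate.
  destruct HED as [HED|HED].
  - apply Rmult_le_reg_r with (expected_depth P T); [lra|].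
    replace (INR m * ln (INR K) / expected_depth P T * expected_depth P T)
      with (INR m * ln (INR K)) by (field; lra).
    lra.
  - rewrite <- HED. unfold Rdiv. rewrite Rinv_0, Rmult_0_r. nra.
Qed.
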